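(* Let $G$ be a split reductive group whose root system $\Phi$ is irreducible of simply-laced type and of rank $r\geqslant2$, and let $\widetilde G$ be an $n$-fold Brylinski--Deligne cover associated with a Weyl-invariant quadratic form $Q$. Then $n_\alpha$ is independent of $\alpha\in\Delta$ and $$\mathrm{Im}(f_X)=\frac{[1,\mathrm{ht}(\alpha_0)]}{n_\alpha}=\mathrm{Im}(f_Y),$$ where $\mathrm{ht}(\alpha_0)$ is the height of the highest root $\alpha_0$ and $[a,b]$ denotes $\{a,a+1,\dots,b\}$.
   Context: Notation: root datum $(X,\Phi,\Delta;Y,\Phi^\vee,\Delta^\vee)$, positive roots $\Phi_+$, positive coroots $\Phi_+^\vee$; $\omega_\alpha\in X\otimes\mathbf R$ ($\alpha\in\Delta$) the fundamental weights (dual to $\Delta^\vee$), $\omega_\alpha^\vee$ the fundamental coweights, $\rho^\vee=\sum_{\alpha\in\Delta}\omega^\vee_\alpha$. $B_Q(y,z)=Q(y+z)-Q(y)-Q(z)$, $Y_{Q,n}=\{y\in Y:B_Q(y,z)\in n\mathbf Z\ \forall z\in Y\}$, $n_\alpha=n/\gcd(n,Q(\alpha^\vee))$, and $\tilde n_\alpha\in\{n_\alpha,n_\alpha/2\}$ ($\alpha\in\Phi$) is defined by $\mathbf Z\alpha^\vee\cap Y_{Q,n}=\mathbf Z\tilde n_\alpha\alpha^\vee$. Define $f_X:\Phi_+^\vee\to\mathbf Q$ by $f_X(\beta^\vee)=\sum_{\alpha\in\Delta}\langle\omega_\alpha/\tilde n_\alpha,\beta^\vee\rangle$ and $f_Y:\Phi_+\to\mathbf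 Q$ by $f_Y(\beta)=\langle\rho^\vee,\beta\rangle/\tilde n_\beta$. *)

(* Defs.v *)
From mathcomp Require Import all_boot all_order all_algebra.
Set Implicit Arguments. Unset Strict Implicit. Unset Printing Implicit Defensive.
Import Order.TTheory GRing.Theory Num.Theory.
Local Open Scope ring_scope.

(* Conventions: the character lattice X and the cocharacter lattice Y are both
   identified with Z^m = 'rV[int]_m, the perfect pairing <x,y> being the dot
   product.  X (x) Q and Y (x) Q are 'rV[rat]_m. *)

Definition pair (m : nat) (x y : 'rV[int]_m) : int := \sum_(i < m) x 0 i * y 0 i.

(* <w, y> for w in X (x) Q and y in Y *)
Definition pairXQ (m : nat) (w : 'rV[rat]_m) (y : 'rV[int]_m) : rat :=
  \sum_(i < m) w 0 i * (y 0 i)%:~R.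

(* <x, v> for x in X and v in Y (x) Q *)
Definition pairYQ (m : nat) (x : 'rV[int]_m) (v : 'rV[rat]_m) : rat :=
  \sum_(i < m) (x 0 i)%:~R * v 0 i.

Definition is_reduced_root_datum (m : nat) (Phi : seq 'rV[int]_m)
    (cor : 'rV[int]_m -> 'rV[int]_m) : Prop :=
  [/\ {in Phi &, injective cor},
      {in Phi, forall a, pair a (cor a) = 2},
      {in Phi &, forall a b, b - pair b (cor a) *: a \in Phi},
      {in Phi &, forall a b, cor b - pair a (cor b) *: cor a \in map cor Phi} &
      {in Phi, forall a (c : int), c *: a \in Phi -> c = 1 \/ c = -1}].

Definition lincomb (m r : nat) (D : 'I_r -> 'rV[int]_m) (c : 'I_r -> int)
  : 'rV[int]_m := \sum_(i < r) c i *: D i.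

Definition is_base (m r : nat) (Phi : seq 'rV[int]_m) (D : 'I_r -> 'rV[int]_m)
  : Prop :=
  [/\ forall i, D i \in Phi,
      forall c, lincomb D c = 0 -> forall i, c i = 0 &
      {in Phi, forall b, exists c, b = lincomb D c /\
          ((forall i, 0 <= c i) \/ (forall i, c i <= 0))}].

Definition positive_root (m r : nat) (Phi : seq 'rV[int]_m)
    (D : 'I_r -> 'rV[int]_m) (b : 'rV[int]_m) : Prop :=
  b \in Phi /\ exists c, b = lincomb D c /\ forall i, 0 <= c i.

Definition irreducible_rs (m : nat) (Phi : seq 'rV[int]_m)
    (cor : 'rV[int]_m -> 'rV[int]_m) : Prop :=
  ~ exists P : pred 'rV[int]_m,
      [/\ exists2 a, a \in Phi & P a,
          exists2 b, b \in Phi & ~~ P b &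
          {in Phi &, forall a b, P a -> ~~ P b -> pair a (cor b) = 0}].

Definition simply_laced (m r : nat) (cor : 'rV[int]_m -> 'rV[int]_m)
    (D : 'I_r -> 'rV[int]_m) : Prop :=
  forall i j, i != j -> pair (D i) (cor (D j)) = 0 \/ pair (D i) (cor (D j)) = -1.

Definition is_highest_root (m r : nat) (Phi : seq 'rV[int]_m)
    (D : 'I_r -> 'rV[int]_m) (a0 : 'rV[int]_m) : Prop :=
  a0 \in Phi /\ {in Phi, forall b, exists c, a0 - b = lincomb D c /\ forall i, 0 <= c i}.

Definition BQ (m : nat) (Q : 'rV[int]_m -> int) (y z : 'rV[int]_m) : int :=
  Q (y + z) - Q y - Q z.

Definition is_quadratic_form (m : nat) (Q : 'rV[int]_m -> int) : Prop :=
  (forall (k : int) y, Q (k *: y) = k ^+ 2 * Q y) /\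
  (forall y1 y2 z, BQ Q (y1 + y2) z = BQ Q y1 z + BQ Q y2 z).

(* Weyl invariance on Y: W is generated by y |-> y - <a, y> a^vee *)
Definition weyl_invariant (m : nat) (Phi : seq 'rV[int]_m)
    (cor : 'rV[int]_m -> 'rV[int]_m) (Q : 'rV[int]_m -> int) : Prop :=
  {in Phi, forall a y, Q (y - pair a y *: cor a) = Q y}.

Definition inYQn (m : nat) (Q : 'rV[int]_m -> int) (n : nat) (y : 'rV[int]_m) : Prop :=
  forall z, (n%:Z %| BQ Q y z)%Z.

Definition n_alpha (m : nat) (Q : 'rV[int]_m -> int) (n : nat)
    (cor : 'rV[int]_m -> 'rV[int]_m) (a : 'rV[int]_m) : nat :=
  (n %/ gcdn n `|Q (cor a)|)%N.

Definition is_ntilde (m : nat) (Phi : seq 'rV[int]_m)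
    (cor : 'rV[int]_m -> 'rV[int]_m) (Q : 'rV[int]_m -> int) (n : nat)
    (ntil : 'rV[int]_m -> nat) : Prop :=
  {in Phi, forall a, (0 < ntil a)%N /\
     forall k : int, inYQn Q n (k *: cor a) <-> ((ntil a)%:Z %| k)%Z}.

Definition f_X (m r : nat) (D : 'I_r -> 'rV[int]_m) (ntil : 'rV[int]_m -> nat)
    (om : 'I_r -> 'rV[rat]_m) (bv : 'rV[int]_m) : rat :=
  \sum_(i < r) pairXQ (om i) bv / (ntil (D i))%:R.

Definition rho_vee (m r : nat) (omv : 'I_r -> 'rV[rat]_m) : 'rV[rat]_m :=
  \sum_(i < r) omv i.

Definition f_Y (m r : nat) (ntil : 'rV[int]_m -> nat)
    (omv : 'I_r -> 'rV[rat]_m) (b : 'rV[int]_m) : rat :=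
  pairYQ b (rho_vee omv) / (ntil b)%:R.

Definition height (m r : nat) (omv : 'I_r -> 'rV[rat]_m) (b : 'rV[int]_m) : rat :=
  pairYQ b (rho_vee omv).

(* Main.v *)
Require Import Defs.
From mathcomp Require Import all_boot all_order all_algebra.
From mathcomp Require Import ring lra zify.
Set Implicit Arguments. Unset Strict Implicit. Unset Printing Implicit Defensive.
Import Order.TTheory GRing.Theory Num.Theory.
Local Open Scope ring_scope.

Section Lin.
Variable m : nat.
Implicit Types x y z : 'rV[int]_m.

Lemma pairDl x y z : pair (x + y) z = pair x z + pair y z.
Proof. by rewrite /pair -big_split; apply: eq_bigr => i _; rewrite mxE mulrDl. Qed.
Lemma pairDr x y z : pair x (y + z) = pair x y + pair x z.
Proof. by rewrite /pair -big_split; apply: eq_bigr => i _; rewrite mxE mulrDr. Qed.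
Lemma pairZl (k : int) x z : pair (k *: x) z = k * pair x z.
Proof. by rewrite /pair mulr_sumr; apply: eq_bigr => i _; rewrite mxE mulrA. Qed.
Lemma pairZr (k : int) x z : pair x (k *: z) = k * pair x z.
Proof. by rewrite /pair mulr_sumr; apply: eq_bigr => i _; rewrite mxE mulrCA. Qed.
Lemma pairNl x z : pair (- x) z = - pair x z.
Proof. by rewrite -scaleN1r pairZl mulN1r. Qed.
Lemma pairNr x z : pair x (- z) = - pair x z.
Proof. by rewrite -scaleN1r pairZr mulN1r. Qed.
Lemma pairBl x y z : pair (x - y) z = pair x z - pair y z.
Proof. by rewrite pairDl pairNl. Qed.
Lemma pairBr x y z : pair x (y - z) = pair x y - pair x z.
Proof. by rewrite pairDr pairNr. Qed.
Lemma pair0l z : pair 0 z = 0.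
Proof. by rewrite -(scale0r 0) pairZl mul0r. Qed.
Lemma pair0r z : pair z 0 = 0.
Proof. by rewrite -(scale0r 0) pairZr mul0r. Qed.
Lemma pair_suml (I : Type) (s : seq I) (P : pred I) (f : I -> 'rV[int]_m) z :
  pair (\sum_(i <- s | P i) f i) z = \sum_(i <- s | P i) pair (f i) z.
Proof. by apply: (big_morph (fun x => pair x z)); [move=> ??; apply: pairDl|apply: pair0l]. Qed.
Lemma pair_sumr (I : Type) (s : seq I) (P : pred I) (f : I -> 'rV[int]_m) z :
  pair z (\sum_(i <- s | P i) f i) = \sum_(i <- s | P i) pair z (f i).
Proof. by apply: (big_morph (fun x => pair z x)); [move=> ??; apply: pairDr|apply: pair0r]. Qed.

Lemma pair_delta (l : 'I_m) z : pair (delta_mx 0 l) z = z 0 l.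
Proof.
rewrite /pair (bigD1 l) //= big1 ?addr0; first by rewrite mxE !eqxx mul1r.
by move=> i /negbTE il; rewrite mxE il andbF mul0r.
Qed.

Lemma pair_ext y z : (forall x, pair x y = pair x z) -> y = z.
Proof. by move=> H; apply/rowP => l; rewrite -!pair_delta H. Qed.

Lemma pairYQDl x y (v : 'rV[rat]_m) : pairYQ (x + y) v = pairYQ x v + pairYQ y v.
Proof. by rewrite /pairYQ -big_split; apply: eq_bigr => i _; rewrite mxE intrD mulrDl. Qed.
Lemma pairYQZl (k : int) x (v : 'rV[rat]_m) : pairYQ (k *: x) v = k%:~R * pairYQ x v.
Proof. by rewrite /pairYQ mulr_sumr; apply: eq_bigr => i _; rewrite mxE intrM mulrA. Qed.
Lemma pairYQ0l (v : 'rV[rat]_m) : pairYQ 0 v = 0.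
Proof. by rewrite -(scale0r 0) pairYQZl mul0r. Qed.
Lemma pairYQNl x (v : 'rV[rat]_m) : pairYQ (- x) v = - pairYQ x v.
Proof. by rewrite -scaleN1r pairYQZl mulN1r. Qed.
Lemma pairYQBl x y (v : 'rV[rat]_m) : pairYQ (x - y) v = pairYQ x v - pairYQ y v.
Proof. by rewrite pairYQDl pairYQNl. Qed.
Lemma pairYQ_suml (I : Type) (s : seq I) (P : pred I) (f : I -> 'rV[int]_m) v :
  pairYQ (\sum_(i <- s | P i) f i) v = \sum_(i <- s | P i) pairYQ (f i) v.
Proof. by apply: (big_morph (fun x => pairYQ x v)); [move=> ??; apply: pairYQDl|apply: pairYQ0l]. Qed.
Lemma pairYQ_sumr (I : Type) (s : seq I) (P : pred I) (f : I -> 'rV[rat]_m) x :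
  pairYQ x (\sum_(i <- s | P i) f i) = \sum_(i <- s | P i) pairYQ x (f i).
Proof.
apply: (big_morph (fun v => pairYQ x v)).
  by move=> ??; rewrite /pairYQ -big_split; apply: eq_bigr => i _; rewrite mxE mulrDr.
by rewrite /pairYQ big1 // => i _; rewrite mxE mulr0.
Qed.

Lemma pairXQ_lin (w : 'rV[rat]_m) (n : nat) (c : 'I_n -> int) (f : 'I_n -> 'rV[int]_m) :
  pairXQ w (\sum_(i < n) c i *: f i) = \sum_(i < n) (c i)%:~R * pairXQ w (f i).
Proof.
have H0 : pairXQ w 0 = 0 by rewrite /pairXQ big1 // => i _; rewrite mxE mulr0.
have HD : forall x y, pairXQ w (x + y) = pairXQ w x + pairXQ w y.
  by move=> x y; rewrite /pairXQ -big_split; apply: eq_bigr => i _; rewrite mxE intrD mulrDr.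
rewrite (big_morph (fun x => pairXQ w x) HD H0); apply: eq_bigr => i _.
by rewrite /pairXQ mulr_sumr; apply: eq_bigr => l _; rewrite mxE intrM mulrCA.
Qed.
End Lin.

Section Roots.
Variables (m r : nat) (Phi : seq 'rV[int]_m) (cor : 'rV[int]_m -> 'rV[int]_m)
  (D : 'I_r -> 'rV[int]_m) (omv : 'I_r -> 'rV[rat]_m).
Hypothesis Hrd : is_reduced_root_datum Phi cor.
Hypothesis Hb : is_base Phi D.
Hypothesis Homv : forall i j, pairYQ (D j) (omv i) = (i == j)%:R.

Definition s a x := x - pair x (cor a) *: a.
Definition sv a y := y - pair a y *: cor a.
Definition V := undup (map cor Phi).
Definition F x y := \sum_(v <- V) pair x v * pair y v.
Definition coef b i := pairYQ b (omv i).

Lemma root2 a : a \in Phi -> pair a (cor a) = 2.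
Proof. by case: Hrd => _ H _ _ _; apply: H. Qed.

Lemma s_root a b : a \in Phi -> b \in Phi -> s a b \in Phi.
Proof. by case: Hrd => _ _ H _ _; apply: H. Qed.

Lemma s_self a : a \in Phi -> s a a = - a.
Proof. by move=> aP; rewrite /s root2 // scaler_nat mulr2n opprD addrA subrr sub0r. Qed.

Lemma neg_root a : a \in Phi -> - a \in Phi.
Proof. by move=> aP; rewrite -s_self // s_root. Qed.

Lemma s_invol a x : a \in Phi -> s a (s a x) = x.
Proof.
move=> aP; rewrite /s pairBl pairZl root2 //.
have -> : pair x (cor a) - pair x (cor a) * 2 = - pair x (cor a) by ring.
by rewrite scaleNr opprK subrK.
Qed.

Lemma sv_invol a y : a \in Phi -> sv a (sv a y) = y.
Proof.
move=> aP; rewrite /sv pairBr pairZr root2 //.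
have -> : pair a y - pair a y * 2 = - pair a y by ring.
by rewrite scaleNr opprK subrK.
Qed.

Lemma pair_s a x y : pair (s a x) y = pair x (sv a y).
Proof. by rewrite /s /sv pairBl pairBr pairZl pairZr mulrC. Qed.

Lemma sv_V a v : a \in Phi -> v \in V -> sv a v \in V.
Proof.
move=> aP; rewrite /V !mem_undup => /mapP[b bP ->].
by case: Hrd => _ _ _ H _; apply: H.
Qed.

Lemma perm_V a : a \in Phi -> perm_eq (map (sv a) V) V.
Proof.
move=> aP; have inj : injective (sv a) by apply: (can_inj (fun y => sv_invol y aP)).
have U : uniq (map (sv a) V) by rewrite map_inj_uniq // undup_uniq.
have sub : {subset map (sv a) V <= V} by move=> v /mapP[w wV ->]; apply: sv_V.
have [_ eqs] := uniq_min_size U sub (eq_leq (esym (size_map _ _))).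
by apply: uniq_perm => //; rewrite undup_uniq.
Qed.

Lemma Fsym x y : F x y = F y x.
Proof. by apply: eq_bigr => v _; rewrite mulrC. Qed.
Lemma FDl x y z : F (x + y) z = F x z + F y z.
Proof. by rewrite /F -big_split; apply: eq_bigr => v _; rewrite pairDl mulrDl. Qed.
Lemma FZl (k : int) x z : F (k *: x) z = k * F x z.
Proof. by rewrite /F mulr_sumr; apply: eq_bigr => v _; rewrite pairZl mulrA. Qed.
Lemma FNl x z : F (- x) z = - F x z.
Proof. by rewrite -scaleN1r FZl mulN1r. Qed.
Lemma FBl x y z : F (x - y) z = F x z - F y z.
Proof. by rewrite FDl FNl. Qed.
Lemma FDr x y z : F z (x + y) = F z x + F z y.
Proof. by rewrite Fsym FDl !(Fsym z). Qed.
Lemma FZr (k : int) x z : F z (k *: x) = k * F z x.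
Proof. by rewrite Fsym FZl Fsym. Qed.
Lemma FNr x z : F z (- x) = - F z x.
Proof. by rewrite Fsym FNl Fsym. Qed.
Lemma FBr x y z : F z (x - y) = F z x - F z y.
Proof. by rewrite FDr FNr. Qed.
Lemma F0l z : F 0 z = 0.
Proof. by rewrite -(scale0r 0) FZl mul0r. Qed.
Lemma F_suml (I : Type) (sq : seq I) (P : pred I) (f : I -> 'rV[int]_m) z :
  F (\sum_(i <- sq | P i) f i) z = \sum_(i <- sq | P i) F (f i) z.
Proof. by apply: (big_morph (fun x => F x z)); [move=> ??; apply: FDl|apply: F0l]. Qed.

Lemma F_ge0 x : 0 <= F x x.
Proof. by apply: sumr_ge0 => v _; rewrite -expr2 sqr_ge0. Qed.

Lemma F_root_gt0 a : a \in Phi -> 0 < F a a.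
Proof.
move=> aP; have cV : cor a \in V by rewrite /V mem_undup map_f.
rewrite /F (bigD1_seq (cor a)) ?undup_uniq //= root2 //.
apply: (@lt_le_trans _ _ (2 * 2)); first by [].
rewrite lerDl; apply: sumr_ge0 => v _; rewrite -expr2 sqr_ge0 //.
Qed.

Lemma F_s a x y : a \in Phi -> F (s a x) (s a y) = F x y.
Proof.
move=> aP; rewrite /F; under eq_bigr do rewrite !pair_s.
rewrite -(big_map (sv a) xpredT (fun v => pair x v * pair y v)).
exact: perm_big (perm_V aP).
Qed.

Lemma F4 x a : a \in Phi -> 2 * F x a = pair x (cor a) * F a a.
Proof.
move=> aP; have := F_s x a aP; rewrite s_self // /s FNr FBl FZl.
move=> H; apply/eqP; rewrite -subr_eq0; apply/eqP.
transitivity (F x a - (- (F x a - pair x (cor a) * F a a))); first ring.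
by rewrite H subrr.
Qed.

Lemma D_root j : D j \in Phi.
Proof. by case: Hb => H _ _; apply: H. Qed.

Lemma root_rep b : b \in Phi -> exists c, b = lincomb D c /\
          ((forall i, 0 <= c i) \/ (forall i, c i <= 0)).
Proof. by case: Hb => _ _ H; apply: H. Qed.

Lemma coef_lincomb c i : coef (lincomb D c) i = (c i)%:~R.
Proof.
rewrite /coef /lincomb pairYQ_suml; under eq_bigr do rewrite pairYQZl Homv.
rewrite (bigD1 i) //= big1 ?addr0; first by rewrite eqxx mulr1.
by move=> l /negbTE il; rewrite eq_sym il mulr0.
Qed.

Lemma coef_D j i : coef (D j) i = (i == j)%:R.
Proof. exact: Homv. Qed.

Lemma lincomb_inj c c' : lincomb D c = lincomb D c' -> forall i, c i = c' i.
Proof. by move=> E i; apply: (@intr_inj rat); rewrite -!coef_lincomb E. Qed.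

Lemma sum_delta (T : zmodType) (f : 'I_r -> T) j :
  \sum_(i < r) (if i == j then f i else 0) = f j.
Proof.
rewrite (bigD1 j) //= eqxx big1 ?addr0 // => i /negbTE ->; by [].
Qed.

Lemma lincomb_delta j : lincomb D (fun i => (i == j)%:R) = D j.
Proof.
rewrite /lincomb -[RHS](sum_delta (fun i => D i) j); apply: eq_bigr => i _.
by case: (i == j); rewrite ?scale1r ?scale0r.
Qed.

Lemma lincomb_sub c j (k : int) :
  lincomb D (fun i => c i - (i == j)%:R * k) = lincomb D c - k *: D j.
Proof.
rewrite /lincomb; under eq_bigr do rewrite scalerBl.
rewrite sumrB; congr (_ - _).
rewrite -[RHS](sum_delta (fun i => k *: D i) j); apply: eq_bigr => i _.
by case: (i == j); rewrite ?mul1r ?mul0r ?scale0r.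
Qed.

Lemma lincomb_add c c' : lincomb D (fun i => c i + c' i) = lincomb D c + lincomb D c'.
Proof. by rewrite /lincomb -big_split; apply: eq_bigr => i _; rewrite scalerDl. Qed.

Lemma lincomb_opp c : lincomb D (fun i => - c i) = - lincomb D c.
Proof. by rewrite /lincomb -sumrN; apply: eq_bigr => i _; rewrite scaleNr. Qed.

Lemma pair_lincomb c y : pair (lincomb D c) y = \sum_(i < r) c i * pair (D i) y.
Proof. by rewrite /lincomb pair_suml; apply: eq_bigr => i _; rewrite pairZl. Qed.

Lemma F_lincomb c y : F (lincomb D c) y = \sum_(i < r) c i * F (D i) y.
Proof. by rewrite /lincomb F_suml; apply: eq_bigr => i _; rewrite FZl. Qed.

Lemma pos_exists_pair b c : b \in Phi -> b = lincomb D c -> (forall i, 0 <= c i) ->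
  exists j, 0 < pair b (cor (D j)).
Proof.
move=> bP Hbc c0.
case: (boolP [exists j, 0 < pair b (cor (D j))]) => [/existsP//|/existsPn H].
have : F b b <= 0.
  rewrite {1}Hbc F_lincomb; apply: sumr_le0 => i _; rewrite Fsym.
  apply: mulr_ge0_le0; first exact: c0.
  have := F4 b (D_root i); have := F_ge0 (D i); have := H i.
  rewrite -leNgt => h1 h2 h3.
  have : pair b (cor (D i)) * F (D i) (D i) <= 0 by apply: mulr_le0_ge0.
  rewrite -h3; lia.
by rewrite leNgt F_root_gt0.
Qed.

Lemma descent b c : b \in Phi -> b = lincomb D c -> (forall i, 0 <= c i) ->
  (exists j, b = D j) \/
  (exists j, [/\ 0 < pair b (cor (D j)),
      forall i, 0 <= c i - (i == j)%:R * pair b (cor (D j)) &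
      s (D j) b = lincomb D (fun i => c i - (i == j)%:R * pair b (cor (D j)))]).
Proof.
move=> bP Hbc c0; have [j kpos] := pos_exists_pair bP Hbc c0.
set k := pair b (cor (D j)).
set c' := fun i => c i - (i == j)%:R * k.
have E : s (D j) b = lincomb D c' by rewrite lincomb_sub -Hbc.
have sP : s (D j) b \in Phi by apply: s_root => //; apply: D_root.
have [c'' [E'' [pos|neg]]] := root_rep sP.
  right; exists j; split => // i.
   by rewrite -/k -/(c' i) (lincomb_inj (etrans (esym E) E'')).
left; exists j.
have ci0 : forall i, i != j -> c i = 0.
  move=> i /negbTE ij; apply/eqP; rewrite eq_le c0 andbT.
  have := neg i; rewrite -(lincomb_inj (etrans (esym E) E'')) /c' ij mul0r subr0 //.
have bj : b = c j *: D j.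
  rewrite Hbc /lincomb (bigD1 j) //= big1 ?addr0 // => i ij.
  by rewrite ci0 // scale0r.
have [cj1|cjm1] : c j = 1 \/ c j = -1.
  by case: Hrd => _ _ _ _ H; apply: (H (D j) (D_root j)); rewrite -bj.
  by rewrite bj cj1 scale1r.
by have := c0 j; rewrite cjm1.
Qed.

Lemma sum_sub c j (k : int) :
  \sum_(i < r) (c i - (i == j)%:R * k) = \sum_(i < r) c i - k.
Proof.
rewrite sumrB; congr (_ - _).
rewrite -[RHS](sum_delta (fun i => k) j); apply: eq_bigr => i _.
by case: (i == j); rewrite ?mul1r ?mul0r.
Qed.

Lemma pos_ind (P : 'rV[int]_m -> Prop) :
  (forall j, P (D j)) ->
  (forall b c j, b \in Phi -> b = lincomb D c -> (forall i, 0 <= c i) ->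
     0 < pair b (cor (D j)) ->
     (forall i, 0 <= c i - (i == j)%:R * pair b (cor (D j))) ->
     s (D j) b = lincomb D (fun i => c i - (i == j)%:R * pair b (cor (D j))) ->
     P (s (D j) b) -> P b) ->
  forall b c, b \in Phi -> b = lincomb D c -> (forall i, 0 <= c i) -> P b.
Proof.
move=> Hbase Hstep.
suff H : forall n : nat, forall b c, b \in Phi -> b = lincomb D c ->
    (forall i, 0 <= c i) -> \sum_(i < r) c i < n%:Z -> P b.
  move=> b c bP Hbc c0; apply: (H `|\sum_(i < r) c i|.+1 b c) => //.
  have : 0 <= \sum_(i < r) c i by apply: sumr_ge0 => i _; apply: c0.
  lia.
elim => [|n IH] b c bP Hbc c0 hs.
  have : 0 <= \sum_(i < r) c i by apply: sumr_ge0 => i _; apply: c0.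
  lia.
case: (descent bP Hbc c0) => [[j ->]//|[j [kpos c'0 E]]].
apply: (Hstep b c j) => //.
apply: (IH _ _ (s_root (D_root j) bP) E c'0).
rewrite sum_sub; move: hs kpos; set S := \sum_(i < r) c i; set k := pair _ _; lia.
Qed.

Hypothesis Hsl : simply_laced cor D.
Hypothesis Hirr : irreducible_rs Phi cor.

Definition A i j := pair (D i) (cor (D j)).
Definition L i := F (D i) (D i).

Lemma L_gt0 i : 0 < L i.
Proof. exact: F_root_gt0 (D_root i). Qed.

Lemma A_diag i : A i i = 2.
Proof. exact: root2 (D_root i). Qed.

Lemma A_F i j : 2 * F (D i) (D j) = A i j * L j.
Proof. by rewrite /A /L; apply: F4; apply: D_root. Qed.

Lemma A_sym i j : A i j = A j i.
Proof.
case: (eqVneq i j) => [->//|ij].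
have h1 := A_F i j; have h2 := A_F j i; rewrite Fsym in h2.
have Li := L_gt0 i; have Lj := L_gt0 j.
have ji : j != i by rewrite eq_sym.
have [a1|a1] := Hsl ij; have [a2|a2] := Hsl ji;
  rewrite /A ?a1 ?a2 //; rewrite /A in h1 h2; rewrite ?a1 ?a2 in h1 h2; lia.
Qed.

Lemma L_adj i j : A i j = -1 -> L i = L j.
Proof.
move=> a; have h1 := A_F i j; have h2 := A_F j i; rewrite Fsym -A_sym a in h2.
rewrite a in h1; lia.
Qed.

Definition e : rel 'I_r := fun i j => A i j == -1.

Lemma connect_eq (T : Type) (f : 'I_r -> T) :
  (forall i j, e i j -> f i = f j) -> forall i j, connect e i j -> f i = f j.
Proof.
move=> H i j /connectP[p pth ->]; elim: p i pth => //= l p IH i /andP[eil pth].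
by rewrite (H _ _ eil); apply: IH.
Qed.

Definition Pc i0 b := forall l, ~~ connect e i0 l -> coef b l = 0.
Definition Pc' i0 b := forall l, connect e i0 l -> coef b l = 0.

Lemma coef_s b j l : coef (s (D j) b) l = coef b l - (pair b (cor (D j)))%:~R * (l == j)%:R.
Proof. by rewrite /coef /s pairYQBl pairYQZl -/(coef (D j) l) coef_D. Qed.

Lemma coef_eq0 c l : coef (lincomb D c) l = 0 -> c l = 0.
Proof. by rewrite coef_lincomb => /eqP; rewrite intr_eq0 => /eqP. Qed.

Lemma pair_s_self b j : pair (s (D j) b) (cor (D j)) = - pair b (cor (D j)).
Proof. rewrite /s pairBl pairZl root2 ?D_root //; ring. Qed.

Lemma not_conn_A i0 l j : connect e i0 l -> ~~ connect e i0 j -> A l j = 0.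
Proof.
move=> cl cj; have lj : l != j by apply: contraNneq cj => <-.
have [//|a] := Hsl lj; exfalso.
by move/negP: cj; apply; apply: connect_trans cl (connect1 _); apply/eqP.
Qed.

Lemma dich_pos i0 b c : b \in Phi -> b = lincomb D c -> (forall i, 0 <= c i) ->
  Pc i0 b \/ Pc' i0 b.
Proof.
apply: (pos_ind (P := fun b => Pc i0 b \/ Pc' i0 b)).
  move=> j; case: (boolP (connect e i0 j)) => h; [left|right] => l hl;
  rewrite coef_D; case: (eqVneq l j) => [lj|//]; subst l.
    by rewrite h in hl.
  by rewrite hl in h.
move=> {}b {}c j bP Hbc c0 kpos c'0 E IH.
set k := pair b (cor (D j)) in kpos c'0 E IH *.
have coefb : forall l, l != j -> coef b l = coef (s (D j) b) l.
  by move=> l /negbTE lj; rewrite coef_s lj mulr0 subr0.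
have Hsum : pair (s (D j) b) (cor (D j)) = - k by rewrite pair_s_self.
rewrite E pair_lincomb in Hsum.
case: IH => [H|H].
  case: (boolP (connect e i0 j)) => cj.
    left => l hl; rewrite coefb ?H //; by apply: contraNneq hl => ->.
  exfalso; suff : \sum_(i < r) (c i - (i == j)%:R * k) * pair (D i) (cor (D j)) = 0.
    by rewrite Hsum; lia.
  apply: big1 => l _.
  case: (boolP (connect e i0 l)) => cl.
    by rewrite -/(A l j) (not_conn_A cl cj) mulr0.
  by rewrite (coef_eq0 (l := l) (c := fun i => c i - (i == j)%:R * k)) ?mul0r // -E H.
case: (boolP (connect e i0 j)) => cj.
  exfalso; suff : \sum_(i < r) (c i - (i == j)%:R * k) * pair (D i) (cor (D j)) = 0.
    by rewrite Hsum; lia.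
  apply: big1 => l _.
  case: (boolP (connect e i0 l)) => cl.
    by rewrite (coef_eq0 (l := l) (c := fun i => c i - (i == j)%:R * k)) ?mul0r // -E H.
  by rewrite -/(A l j) A_sym (not_conn_A cj cl) mulr0.
right => l hl; rewrite coefb ?H //; by apply: contraNneq cj => <-.
Qed.

Lemma dich_all i0 b : b \in Phi -> Pc i0 b \/ Pc' i0 b.
Proof.
move=> bP; have [c [Hbc [pos|neg]]] := root_rep bP.
  exact: dich_pos bP Hbc pos.
have nbP := neg_root bP.
have E : - b = lincomb D (fun i => - c i) by rewrite lincomb_opp Hbc.
have c0 : forall i, 0 <= - c i by move=> i; rewrite oppr_ge0.
have cN : forall l, coef (- b) l = - coef b l by move=> l; rewrite /coef pairYQNl.
case: (dich_pos i0 nbP E c0) => H; [left|right] => l hl; apply/eqP;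
  by rewrite -oppr_eq0 -cN H.
Qed.

Lemma F_orth i0 l l' : connect e i0 l -> ~~ connect e i0 l' -> F (D l') (D l) = 0.
Proof.
move=> cl cl'; have := A_F l' l; rewrite A_sym (not_conn_A cl cl') mul0r.
lia.
Qed.

Lemma connected i0 j : connect e i0 j.
Proof.
case: (boolP (connect e i0 j)) => // nc; exfalso; apply: Hirr.
exists (fun b => [forall l, ~~ connect e i0 l ==> (coef b l == 0)]); split.
- exists (D i0); first exact: D_root.
  apply/forallP => l; apply/implyP => hl; rewrite coef_D.
  case: (eqVneq l i0) => [li|//]; subst l; by rewrite connect0 in hl.
- exists (D j); first exact: D_root.
  apply/negP => /forallP /(_ j) /implyP /(_ nc); by rewrite coef_D eqxx oner_eq0.
- move=> a b aP bP Pa nPb.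
  have Pca : Pc i0 a by move=> l hl; apply/eqP; move/forallP: Pa => /(_ l) /implyP; apply.
  have Pcb : Pc' i0 b.
    case: (dich_all i0 bP) => // H; exfalso; move/negP: nPb; apply.
    by apply/forallP => l; apply/implyP => hl; apply/eqP; apply: H.
  have [ca [Ea _]] := root_rep aP; have [cb [Eb _]] := root_rep bP.
  have Fab : F a b = 0.
    rewrite {1}Ea F_lincomb; apply: big1 => l _.
    case: (boolP (connect e i0 l)) => cl; last first.
      by rewrite (coef_eq0 (c := ca) (l := l)) ?mul0r // -Ea Pca.
    rewrite Fsym Eb F_lincomb big1 ?mulr0 // => l' _.
    case: (boolP (connect e i0 l')) => cl'.
      by rewrite (coef_eq0 (c := cb) (l := l')) ?mul0r // -Eb Pcb.
    by rewrite (F_orth cl cl') mulr0.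
  have := F4 a bP; rewrite Fab mulr0 => /esym /eqP; rewrite mulf_eq0.
  by case/orP => // /eqP H; have := F_root_gt0 bP; rewrite H.
Qed.

Lemma L_const i j : L i = L j.
Proof.
apply: (connect_eq (f := L)) (connected i j) => i' j' /eqP; exact: L_adj.
Qed.

Definition posr b := exists2 c, b = lincomb D c & forall i, 0 <= c i.

Lemma len_pos j b c : b \in Phi -> b = lincomb D c -> (forall i, 0 <= c i) -> F b b = L j.
Proof.
move: b c; apply: pos_ind; first by move=> j'; apply: L_const.
move=> b c j' bP _ _ _ _ _ IH; by rewrite -IH F_s ?D_root.
Qed.

Lemma cor_refl a b : a \in Phi -> b \in Phi -> cor (s a b) = sv a (cor b).
Proof.
move=> aP bP; apply: pair_ext => x.
have sbP : s a b \in Phi by apply: s_root.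
have Fpos := F_root_gt0 bP.
have e1 := F4 x sbP; rewrite F_s // in e1.
have e2 := F4 (s a x) bP.
have e3 : F (s a x) b = F x (s a b) by rewrite -(F_s (s a x) b aP) s_invol.
rewrite -pair_s; apply: (mulIf (lt0r_neq0 Fpos)).
by rewrite -e1 -e2 e3.
Qed.

Lemma pair_sym_len a b : a \in Phi -> b \in Phi -> F a a = F b b ->
  pair a (cor b) = pair b (cor a).
Proof.
move=> aP bP Hl; have e1 := F4 a bP; have e2 := F4 b aP.
rewrite Fsym e1 Hl in e2; apply: (mulIf (lt0r_neq0 (F_root_gt0 bP))); exact: e2.
Qed.

Lemma lincomb_subG (f : 'I_r -> 'rV[int]_m) c j (k : int) :
  lincomb f (fun i => c i - (i == j)%:R * k) = lincomb f c - k *: f j.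
Proof.
rewrite /lincomb; under eq_bigr do rewrite scalerBl.
rewrite sumrB; congr (_ - _).
rewrite -[RHS](sum_delta (fun i => k *: f i) j); apply: eq_bigr => i _.
by case: (i == j); rewrite ?mul1r ?mul0r ?scale0r.
Qed.

Lemma cor_pos b c : b \in Phi -> b = lincomb D c -> (forall i, 0 <= c i) ->
  cor b = lincomb (fun i => cor (D i)) c.
Proof.
move=> bP Hbc c0.
suff H : forall c', b = lincomb D c' -> cor b = lincomb (fun i => cor (D i)) c' by apply: H.
move: b c bP Hbc c0; apply: pos_ind.
  move=> j c' E; have := lincomb_inj (etrans (lincomb_delta j) E) => h.
  rewrite /lincomb -[LHS](sum_delta (fun i => cor (D i)) j); apply: eq_bigr => i _.
  by rewrite -h; case: (i == j); rewrite ?scale1r ?scale0r.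
move=> b c j bP Hbc c0 kpos c'0 E IH c'' Ebc''.
have cc : forall i, c'' i = c i by apply: lincomb_inj; rewrite -Ebc'' -Hbc.
have := IH _ E; rewrite cor_refl ?D_root // /sv.
rewrite (pair_sym_len (D_root j) bP); last by rewrite (len_pos j bP Hbc c0).
rewrite lincomb_subG => /(congr1 (fun v => v + pair b (cor (D j)) *: cor (D j))).
rewrite !subrK => ->; rewrite /lincomb; apply: eq_bigr => i _; by rewrite cc.
Qed.

Variable a0 : 'rV[int]_m.
Hypothesis Ha0 : is_highest_root Phi D a0.

Lemma coefB x y l : coef (x - y) l = coef x l - coef y l.
Proof. by rewrite /coef pairYQBl. Qed.

Lemma below_a0 y l : y \in Phi -> coef y l <= coef a0 l.
Proof.
case: Ha0 => _ H yP; have [c [E c0]] := H y yP.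
by rewrite -subr_ge0 -coefB E coef_lincomb ler0z.
Qed.

Lemma lincomb_scale (a : int) c : lincomb D (fun i => a * c i) = a *: lincomb D c.
Proof. by rewrite /lincomb scaler_sumr; apply: eq_bigr => i _; rewrite scalerA. Qed.

Lemma k_one b c j : b \in Phi -> b = lincomb D c -> (forall i, 0 <= c i) ->
  0 < pair b (cor (D j)) ->
  (forall i, 0 <= c i - (i == j)%:R * pair b (cor (D j))) ->
  pair b (cor (D j)) = 1.
Proof.
move=> bP Hbc c0 kpos c'0.
set k := pair b (cor (D j)) in kpos c'0 *.
have Lb := len_pos j bP Hbc c0.
have k' : pair (D j) (cor b) = k by apply: (pair_sym_len (D_root j) bP); rewrite Lb.
have Lpos := L_gt0 j.
have hF : 2 * F b (D j) = k * L j by rewrite F4 ?D_root.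
have cj := c'0 j; rewrite eqxx mul1r in cj.
have [k3|k3] := ltP k 3; last first.
  exfalso; have := F_ge0 (b - D j); rewrite FBl !FBr Lb -/(L j).
  rewrite (Fsym (D j) b); nia.
case: (eqVneq k 1) => // k1; exfalso.
have k2 : k = 2 by lia.
set x := b - D j.
have px1 : pair x (cor (D j)) = 0 by rewrite pairBl -/k k2 root2 ?D_root // subrr.
have px2 : pair x (cor b) = 0 by rewrite pairBl k' k2 root2 // subrr.
pose y (n : nat) := D j + (n%:Z * 2) *: x.
have yP : forall n, y n \in Phi.
  elim => [|n IH]; first by rewrite /y mul0r scale0r addr0 D_root.
  have e1 : pair (y n) (cor (D j)) = 2 by rewrite pairDl pairZl px1 mulr0 addr0 root2 ?D_root.
  have e2 : pair (y n - 2 *: D j) (cor b) = -2.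
    by rewrite pairBl pairZl pairDl pairZl px2 mulr0 addr0 k' k2.
  have -> : y n.+1 = s b (s (D j) (y n)).
    rewrite /s e1 e2 /y scaleNr opprK.
    rewrite -[RHS]addrA [- _ + _]addrC -scalerBr -/x -addrA -scalerDl.
    congr (_ + _ *: _); lia.
  by apply: s_root => //; apply: s_root => //; apply: D_root.
have [ca0 [Ea0 _]] : exists c, a0 = lincomb D c /\ True.
  by case: Ha0 => aP _; have [c0' [E _]] := root_rep aP; exists c0'.
set N := `|ca0 j|%N.
have := below_a0 j (yP N).
have Ey : y N = lincomb D (fun i => (i == j)%:R + (N%:Z * 2) * (c i - (i == j)%:R * 1)).
  rewrite lincomb_add lincomb_delta lincomb_scale lincomb_sub -Hbc scale1r //.
rewrite Ey Ea0 !coef_lincomb ler_int eqxx.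
move: cj; rewrite k2 /N; nia.
Qed.

Hypothesis Hr : (2 <= r)%N.

Definition j0 : 'I_r := Ordinal (leq_trans (isT : (1 <= 2)%N) Hr).

Lemma a0_pos : exists2 c, a0 = lincomb D c & forall i, 0 <= c i.
Proof.
case: Ha0 => aP H; have [c [E c0]] := H (D j0) (D_root j0).
exists (fun i => c i + (i == j0)%:R).
  by rewrite lincomb_add lincomb_delta -E subrK.
by move=> i; apply: addr_ge0 => //; case: (i == j0).
Qed.

Lemma sum_c_delta j : \sum_(i < r) ((i == j)%:R : int) = 1.
Proof.
rewrite -[RHS](sum_delta (fun _ => 1 : int) j); apply: eq_bigr => i _.
by case: (i == j).
Qed.

Lemma height_bounds ca0 b c : a0 = lincomb D ca0 ->
  b \in Phi -> b = lincomb D c -> (forall i, 0 <= c i) ->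
  1 <= \sum_(i < r) c i /\ \sum_(i < r) c i <= \sum_(i < r) ca0 i.
Proof.
move=> Ea0 bP Hbc c0; split.
  have s0 : 0 <= \sum_(i < r) c i by apply: sumr_ge0 => i _.
  case: (eqVneq (\sum_(i < r) c i) 0) => [s00|]; last by move: s0; set S := \sum_(i < r) c i => s0 /eqP ne; lia.
  exfalso; have := psumr_eq0P (fun i _ => c0 i) s00 => cz.
  have b0 : b = 0 by rewrite Hbc /lincomb big1 // => i _; rewrite cz // scale0r.
  by have := root2 bP; rewrite b0 pair0l.
apply: ler_sum => i _; have := below_a0 i bP.
by rewrite Ea0 Hbc !coef_lincomb ler_int.
Qed.

Lemma heights_all ca0 : a0 = lincomb D ca0 -> forall h : nat, (1 <= h)%N ->
  h%:Z <= \sum_(i < r) ca0 i ->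
  exists b, exists2 c, [/\ b \in Phi, b = lincomb D c & forall i, 0 <= c i] &
     \sum_(i < r) c i = h%:Z.
Proof.
move=> Ea0.
set S := \sum_(i < r) ca0 i.
suff H : forall d : nat, d%:Z < S -> exists b, exists2 c,
    [/\ b \in Phi, b = lincomb D c & forall i, 0 <= c i] & \sum_(i < r) c i = S - d%:Z.
  move=> h h1 hS; have := H `|S - h%:Z|%N.
  have -> : (`|S - h%:Z|%N)%:Z = S - h%:Z by lia.
  have -> : S - (S - h%:Z) = h%:Z by ring.
  apply; lia.
elim => [|d IH] hd.
  have [c E c0] := a0_pos; exists a0, c; first by case: Ha0.
  have := lincomb_inj (etrans (esym E) Ea0) => cc.
  rewrite subr0 /S; apply: eq_bigr => i _; exact: cc.
have hd' : d%:Z < S by lia.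
have [b [c [bP Hbc c0] sc]] := IH hd'.
case: (descent bP Hbc c0) => [[j bj]|[j [kpos c'0 E]]].
  exfalso; have := lincomb_inj (etrans (esym Hbc) (etrans bj (esym (lincomb_delta j)))).
  move=> cc; have : \sum_(i < r) c i = 1.
    by rewrite -(sum_c_delta j); apply: eq_bigr => i _; exact: cc.
  rewrite sc; lia.
have k1 := k_one bP Hbc c0 kpos c'0.
exists (s (D j) b), (fun i => c i - (i == j)%:R * pair b (cor (D j))).
  by split => //; apply: s_root => //; apply: D_root.
rewrite sum_sub sc k1; lia.
Qed.

Definition j1 : 'I_r := Ordinal Hr.

Lemma neighbor j : exists l, A j l = -1.
Proof.
set l := if j == j0 then j1 else j0.
have lj : l != j by rewrite /l; case: (eqVneq j j0) => [->|//]; rewrite eq_sym.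
have := connected j l => /connectP[p pth El].
case: p pth El => [_ /= El|x p /= /andP[ejx _] _]; first by rewrite El eqxx in lj.
by exists x; apply/eqP.
Qed.

Lemma z_pos b c : b \in Phi -> b = lincomb D c -> (forall i, 0 <= c i) ->
  exists z, pair b z = 1.
Proof.
move: b c; apply: pos_ind.
  move=> j; have [l al] := neighbor j; exists (- cor (D l)).
  by rewrite pairNr -/(A j l) al.
move=> b c j bP _ _ _ _ _ [z hz]; exists (sv (D j) z); by rewrite -pair_s.
Qed.

Variables (Q : 'rV[int]_m -> int) (n : nat) (ntil : 'rV[int]_m -> nat).
Hypothesis HQ : is_quadratic_form Q.
Hypothesis Hw : weyl_invariant Phi cor Q.
Hypothesis Hnt : is_ntilde Phi cor Q n ntil.
Hypothesis Hn0 : (0 < n)%N.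

Lemma BQ_sym y z : BQ Q y z = BQ Q z y.
Proof. by rewrite /BQ [y + z]addrC; ring. Qed.
Lemma BQ_Dl y1 y2 z : BQ Q (y1 + y2) z = BQ Q y1 z + BQ Q y2 z.
Proof. by case: HQ => _ H; apply: H. Qed.
Lemma BQ_0l z : BQ Q 0 z = 0.
Proof. have := BQ_Dl 0 0 z; rewrite addr0; lia. Qed.
Lemma BQ_Nl y z : BQ Q (- y) z = - BQ Q y z.
Proof. have := BQ_Dl y (- y) z; rewrite subrr BQ_0l; lia. Qed.
Lemma BQ_Zl (k : int) y z : BQ Q (k *: y) z = k * BQ Q y z.
Proof.
have Hnat : forall p : nat, BQ Q (p%:Z *: y) z = p%:Z * BQ Q y z.
  elim => [|p IH]; first by rewrite scale0r mul0r BQ_0l.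
  by rewrite intS scalerDl scale1r BQ_Dl IH mulrDl mul1r.
case: k => p; first exact: Hnat.
by rewrite NegzE scaleNr BQ_Nl Hnat mulNr.
Qed.
Lemma BQ_diag y : BQ Q y y = 2 * Q y.
Proof.
have E : y + y = 2 *: y by rewrite -[y in LHS]scale1r -scalerDl.
case: HQ => H _; rewrite /BQ E H; ring.
Qed.

Lemma sv_add a y w : sv a (y + w) = sv a y + sv a w.
Proof. by rewrite /sv pairDr scalerDl opprD addrACA. Qed.

Lemma Q_sv a y : a \in Phi -> Q (sv a y) = Q y.
Proof. by move=> aP; apply: Hw. Qed.

Lemma BQ_sv a y w : a \in Phi -> BQ Q (sv a y) (sv a w) = BQ Q y w.
Proof. by move=> aP; rewrite /BQ -sv_add !Q_sv. Qed.

Lemma BQ_cor a z : a \in Phi -> BQ Q z (cor a) = pair a z * Q (cor a).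
Proof.
move=> aP; have := BQ_sv z (cor a) aP.
have -> : sv a (cor a) = - cor a.
  by rewrite /sv root2 // -{1}[cor a]scale1r -scalerBl (_ : 1 - 2 = -1) // scaleN1r.
rewrite BQ_sym BQ_Nl BQ_sym /sv BQ_Dl BQ_Nl BQ_Zl BQ_diag.
lia.
Qed.

Lemma Q_adj i j : e i j -> Q (cor (D i)) = Q (cor (D j)).
Proof.
move=> /eqP a; have a' : A j i = -1 by rewrite A_sym.
have h1 := Q_sv (cor (D j)) (D_root i); have h2 := Q_sv (cor (D i)) (D_root j).
rewrite /sv -/(A i j) a scaleN1r opprK in h1.
rewrite /sv -/(A j i) a' scaleN1r opprK in h2.
by rewrite -h2 addrC h1.
Qed.

Lemma Q_const i j : Q (cor (D i)) = Q (cor (D j)).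
Proof. exact: (connect_eq (f := fun i => Q (cor (D i))) Q_adj (connected i j)). Qed.

Lemma Q_pos j b c : b \in Phi -> b = lincomb D c -> (forall i, 0 <= c i) ->
  Q (cor b) = Q (cor (D j)).
Proof.
move: b c; apply: pos_ind; first by move=> j'; apply: Q_const.
move=> b c j' bP _ _ _ _ _; rewrite cor_refl ?D_root // Q_sv //; exact: D_root.
Qed.

Lemma dvd_gcd_lemma (a b : nat) : (n %| a * b)%N = (n %/ gcdn n b %| a)%N.
Proof.
have g0 : (0 < gcdn n b)%N by rewrite gcdn_gt0 Hn0.
have cop : coprime (n %/ gcdn n b) (b %/ gcdn n b).
  have E : (gcdn (n %/ gcdn n b) (b %/ gcdn n b) * gcdn n b = gcdn n b)%N.
    by rewrite muln_gcdl !divnK ?dvdn_gcdl ?dvdn_gcdr.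
  rewrite /coprime; apply/eqP; move: E g0.
  set x := gcdn _ _; set g := gcdn n b; nia.
rewrite -[X in (a * X)%N](divnK (dvdn_gcdr n b)).
rewrite -[X in (X %| _)%N](divnK (dvdn_gcdl n b)).
by rewrite mulnA dvdn_pmul2r // Gauss_dvdl.
Qed.

Definition Nn := (n %/ gcdn n `|Q (cor (D j0))|)%N.

Lemma ntil_pos b c : b \in Phi -> b = lincomb D c -> (forall i, 0 <= c i) ->
  ntil b = Nn.
Proof.
move=> bP Hbc c0.
have [z0 hz0] := z_pos bP Hbc c0.
have Qb := Q_pos j0 bP Hbc c0.
have [ntpos Hk] := Hnt bP.
have key : forall k : int, (ntil b %| k)%Z <-> (Nn%:Z %| k)%Z.
  move=> k; rewrite -Hk /inYQn; split.
    move=> /(_ z0); rewrite BQ_Zl BQ_sym BQ_cor // hz0 mul1r Qb.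
    by rewrite dvdzE abszM /= dvd_gcd_lemma dvdzE.
  move=> H z; rewrite BQ_Zl BQ_sym BQ_cor // Qb mulrCA.
  apply: dvdz_mull; move: H.
  by rewrite !dvdzE abszM /= dvd_gcd_lemma.
have h1 := (key (ntil b)).1 (dvdzz _).
have h2 := (key Nn).2 (dvdzz _).
rewrite dvdzE /= in h1; rewrite dvdzE /= in h2.
by apply/eqP; rewrite eqn_dvd h1 h2.
Qed.

Lemma height_lincomb b c : b = lincomb D c -> height omv b = (\sum_(i < r) c i)%:~R.
Proof.
move=> ->; rewrite /height /rho_vee pairYQ_sumr rmorph_sum; apply: eq_bigr => i _.
exact: coef_lincomb.
Qed.

Lemma nat_intr (k : nat) : (k%:R : rat) = (k%:Z)%:~R.
Proof. by rewrite pmulrn. Qed.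

Lemma main_sec (om : 'I_r -> 'rV[rat]_m) :
  (forall i j, pairXQ (om i) (cor (D j)) = (i == j)%:R) ->
  (forall i j, n_alpha Q n cor (D i) = n_alpha Q n cor (D j)) /\
  (forall (i : 'I_r) (q : rat),
     ((exists2 b, positive_root Phi D b & q = f_X D ntil om (cor b)) <->
      (exists k : nat, [/\ (1 <= k)%N, k%:R <= height omv a0 &
                           q = k%:R / (n_alpha Q n cor (D i))%:R])) /\
     ((exists2 b, positive_root Phi D b & q = f_Y ntil omv b) <->
      (exists k : nat, [/\ (1 <= k)%N, k%:R <= height omv a0 &
                           q = k%:R / (n_alpha Q n cor (D i))%:R]))).
Proof.
move=> Hom.
have nal : forall i, n_alpha Q n cor (D i) = Nn.
  by move=> i; rewrite /n_alpha /Nn (Q_const i j0).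
split; first by move=> i j; rewrite !nal.
have ntD : forall i, ntil (D i) = Nn.
  move=> i; apply: (ntil_pos (c := fun l => (l == i)%:R)) (D_root i) _ _.
    by rewrite lincomb_delta.
  by move=> l; case: (l == i).
have fX : forall b c, b \in Phi -> b = lincomb D c -> (forall i, 0 <= c i) ->
    f_X D ntil om (cor b) = (\sum_(i < r) c i)%:~R / Nn%:R.
  move=> b c bP Hbc c0; rewrite /f_X (cor_pos bP Hbc c0) rmorph_sum mulr_suml.
  apply: eq_bigr => i _; rewrite ntD; congr (_ / _).
  rewrite pairXQ_lin; under eq_bigr do rewrite Hom.
  rewrite (bigD1 i) //= eqxx mulr1 big1 ?addr0 // => l /negbTE li.
  by rewrite eq_sym li mulr0.
have fY : forall b c, b \in Phi -> b = lincomb D c -> (forall i, 0 <= c i) ->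
    f_Y ntil omv b = (\sum_(i < r) c i)%:~R / Nn%:R.
  move=> b c bP Hbc c0; rewrite /f_Y (ntil_pos bP Hbc c0); congr (_ / _).
  exact: height_lincomb.
have [ca0 Ea0 ca00] := a0_pos.
have ha0 := height_lincomb Ea0.
have common : forall (i : 'I_r) (q : rat),
    (exists b, exists2 c, [/\ b \in Phi, b = lincomb D c & forall i, 0 <= c i] &
        q = (\sum_(i < r) c i)%:~R / Nn%:R) <->
    (exists k : nat, [/\ (1 <= k)%N, k%:R <= height omv a0 &
                           q = k%:R / (n_alpha Q n cor (D i))%:R]).
  move=> i q; rewrite nal ha0; split.
    move=> [b [c [bP Hbc c0] ->]].
    have [h1 h2] := height_bounds Ea0 bP Hbc c0.
    exists `|(\sum_(i < r) c i)%R|%N.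
    have E : (`|(\sum_(i < r) c i)%R|%N)%:Z = \sum_(i < r) c i.
      by move: h1; set S := \sum_(i < r) c i; lia.
    rewrite nat_intr E ler_int; split => //.
    by move: h1; set S := \sum_(i < r) c i; lia.
  move=> [k [k1 kle ->]]; rewrite nat_intr ler_int in kle.
  have [b [c [bP Hbc c0] sc]] := heights_all Ea0 k1 kle.
  by exists b, c => //; rewrite sc nat_intr.
move=> i q; split.
  rewrite -common; split.
    move=> [b [bP [c [Hbc c0]]] ->]; exists b, c => //; exact: fX.
  move=> [b [c [bP Hbc c0] ->]]; exists b; first by split => //; exists c.
  by rewrite (fX b c).
rewrite -common; split.
  move=> [b [bP [c [Hbc c0]]] ->]; exists b, c => //; exact: fY.
move=> [b [c [bP Hbc c0] ->]]; exists b; first by split => //; exists c.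
by rewrite (fY b c).
Qed.

End Roots.

Theorem lemma3p1 (m r n : nat) (Phi : seq 'rV[int]_m)
    (cor : 'rV[int]_m -> 'rV[int]_m) (D : 'I_r -> 'rV[int]_m)
    (Q : 'rV[int]_m -> int) (ntil : 'rV[int]_m -> nat)
    (om omv : 'I_r -> 'rV[rat]_m) (a0 : 'rV[int]_m) :
  is_reduced_root_datum Phi cor ->
  is_base Phi D ->
  irreducible_rs Phi cor ->
  simply_laced cor D ->
  (2 <= r)%N ->
  (0 < n)%N ->
  is_quadratic_form Q ->
  weyl_invariant Phi cor Q ->
  is_ntilde Phi cor Q n ntil ->
  (forall i j, pairXQ (om i) (cor (D j)) = (i == j)%:R) ->
  (forall i j, pairYQ (D j) (omv i) = (i == j)%:R) ->
  is_highest_root Phi D a0 ->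
  (forall i j, n_alpha Q n cor (D i) = n_alpha Q n cor (D j)) /\
  (forall (i : 'I_r) (q : rat),
     ((exists2 b, positive_root Phi D b & q = f_X D ntil om (cor b)) <->
      (exists k : nat, [/\ (1 <= k)%N, k%:R <= height omv a0 &
                           q = k%:R / (n_alpha Q n cor (D i))%:R])) /\
     ((exists2 b, positive_root Phi D b & q = f_Y ntil omv b) <->
      (exists k : nat, [/\ (1 <= k)%N, k%:R <= height omv a0 &
                           q = k%:R / (n_alpha Q n cor (D i))%:R]))).
Proof.
move=> Hrd Hb Hirr Hsl Hr Hn0 HQ Hw Hnt Hom Homv Ha0.
exact: (main_sec Hrd Hb Homv Hsl Hirr Ha0 Hr HQ Hw Hnt Hn0 Hom).
Qed.
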